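(* Let $f:\{0,\dots,r-1\}^n\to\mathbb{R}$ be an $r$-valued fitness function and let $i\in\{1,\dots,n\}$ be a neutral position of $f$. Consider the $r$-cGA without margins optimizing $f$. Then, for each $j\in\{0,\dots,r-1\}$, the sequence of frequencies $(p^{(t)}_{i,j})_{t\in\mathbb{N}}$ is a martingale.
   Context: Let $n\geq 1$, $r\geq 2$ be integers and $K>0$. The $r$-cGA maximizing $f$ maintains frequencies $p^{(t)}_{i,j}$ ($i\in\{1,\dots,n\}$, $j\in\{0,\dots,r-1\}$), initialized to $1/r$. In iteration $t$ it samples $x,y\in\{0,\dots,r-1\}^n$ independently, each position $i$ independently with $\Pr[x_i=j]=p^{(t)}_{i,j}$; if $f(x)<f(y)$ it swaps $x$ and $y$; then it sets $p^{(t+1)}_{i,j}=p^{(t)}_{i,j}+\frac1K(\mathbf{1}[x_i=j]-\mathbf{1}[y_i=j])$ for all $i,j$, with no margins restricting frequencies. A position $i$ is neutral for $f$ if for all $x,x'\in\{0,\dots,r-1\}^n$ with $x_k=x'_k$ for all $k\neq i$ we have $f(x)=f(x')$. *)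

(* Defs.v *)
From mathcomp Require Import all_boot all_order all_algebra.
Set Implicit Arguments. Unset Strict Implicit. Unset Printing Implicit Defensive.
Import Order.TTheory GRing.Theory Num.Theory.
Local Open Scope ring_scope.

Definition cfg (n r : nat) := {ffun 'I_n -> 'I_r}.

Definition init_freq (R : realFieldType) (n r : nat) : 'M[R]_(n, r) :=
  const_mx (r%:R)^-1.

Definition sample_prob (R : realFieldType) (n r : nat) (p : 'M[R]_(n, r))
  (x : cfg n r) : R := \prod_(i < n) p i (x i).

Definition cga_update (R : realFieldType) (n r : nat) (f : cfg n r -> R) (K : R)
  (p : 'M[R]_(n, r)) (xy : cfg n r * cfg n r) : 'M[R]_(n, r) :=
  let: (x, y) := if f xy.1 < f xy.2 then (xy.2, xy.1) else xy in
  \matrix_(i < n, j < r) (p i j + K^-1 * ((x i == j)%:R - (y i == j)%:R)).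

(* Frequencies p^(s) as a function of the sequence of samples (x,y) drawn in
   iterations 0,1,... *)
Fixpoint cga_traj (R : realFieldType) (n r : nat) (f : cfg n r -> R) (K : R)
  (om : nat -> cfg n r * cfg n r) (s : nat) : 'M[R]_(n, r) :=
  match s with
  | 0 => init_freq R n r
  | s'.+1 => cga_update f K (cga_traj f K om s') (om s')
  end.

Definition ext_seq (n r t : nat) (om : {ffun 'I_t.+1 -> cfg n r * cfg n r})
  : nat -> cfg n r * cfg n r := fun s => om (inord s).

(* Probability that the algorithm draws exactly the samples om in
   iterations 0..t (each x,y sampled independently from the current p). *)
Definition seq_prob (R : realFieldType) (n r t : nat) (f : cfg n r -> R) (K : R)
  (om : {ffun 'I_t.+1 -> cfg n r * cfg n r}) : R :=
  \prod_(s < t.+1)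
     (sample_prob (cga_traj f K (ext_seq om) s) (om s).1 *
      sample_prob (cga_traj f K (ext_seq om) s) (om s).2).

Definition neutral (R : realFieldType) (n r : nat) (f : cfg n r -> R) (i : 'I_n) :=
  forall x x' : cfg n r, (forall k, k != i -> x k = x' k) -> f x = f x'.

(* Main.v *)
Require Import Defs.
From mathcomp Require Import all_boot all_order all_algebra.
From mathcomp Require Import ring lra.
Import Order.TTheory GRing.Theory Num.Theory.
Local Open Scope ring_scope.

Section Aux.
Variables (R : realFieldType) (n r : nat) (K : R) (f : cfg n r -> R) (i : 'I_n).

Definition tau (xy : cfg n r * cfg n r) : cfg n r * cfg n r :=
  ([ffun k => if k == i then xy.2 k else xy.1 k],
   [ffun k => if k == i then xy.1 k else xy.2 k]).

Lemma tauK xy : tau (tau xy) = xy.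
Proof.
case: xy => x y; rewrite /tau /=; congr pair; apply/ffunP => k; rewrite !ffunE;
by case: (k == i).
Qed.

Lemma sample_tau (p : 'M[R]_(n, r)) xy :
  sample_prob p (tau xy).1 * sample_prob p (tau xy).2 =
  sample_prob p xy.1 * sample_prob p xy.2.
Proof.
rewrite /sample_prob -!big_split /=; apply: eq_bigr => k _; rewrite !ffunE.
by case: (k == i) => //; rewrite mulrC.
Qed.

Lemma update_tau (p : 'M[R]_(n, r)) xy j :
  neutral f i ->
  cga_update f K p (tau xy) i j + cga_update f K p xy i j = p i j *+ 2.
Proof.
move=> hn; case: xy => x y.
have ex : f (tau (x, y)).1 = f x.
  by symmetry; apply: hn => k /negbTE hk; rewrite /= ffunE hk.
have ey : f (tau (x, y)).2 = f y.
  by symmetry; apply: hn => k /negbTE hk; rewrite /= ffunE hk.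
rewrite /cga_update /= ex ey.
case: (f x < f y); rewrite !mxE /= !ffunE eqxx; ring.
Qed.

Lemma traj_ext (om1 om2 : nat -> cfg n r * cfg n r) s :
  (forall s', (s' < s)%N -> om1 s' = om2 s') ->
  cga_traj f K om1 s = cga_traj f K om2 s.
Proof.
elim: s => [//|s IH] H /=.
rewrite IH ?H // => s' hs; apply: H; exact: ltnW.
Qed.

Definition Phi t (om : {ffun 'I_t.+1 -> cfg n r * cfg n r}) :
  {ffun 'I_t.+1 -> cfg n r * cfg n r} :=
  [ffun k => if k == ord_max then tau (om k) else om k].

Lemma PhiK t : involutive (@Phi t).
Proof.
move=> om; apply/ffunP => k; rewrite !ffunE.
by case: (k == ord_max) => //; rewrite tauK.
Qed.

Lemma ext_Phi t om s' : (s' < t)%N -> ext_seq (@Phi t om) s' = ext_seq om s'.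
Proof.
move=> hs; rewrite /ext_seq ffunE.
have -> : (inord s' == ord_max :> 'I_t.+1) = false.
  apply/eqP => /(congr1 val); rewrite /= inordK; last by apply: ltnW.
  by move=> e; rewrite e ltnn in hs.
by [].
Qed.

Lemma traj_Phi t om s : (s <= t)%N ->
  cga_traj f K (ext_seq (@Phi t om)) s = cga_traj f K (ext_seq om) s.
Proof.
move=> hs; apply: traj_ext => s' hs'; apply: ext_Phi.
exact: leq_trans hs' hs.
Qed.

End Aux.

Theorem lemma1 (R : realFieldType) (n r : nat) (K : R) (f : cfg n r -> R)
  (i : 'I_n) (j : 'I_r) :
  (1 <= n)%N -> (2 <= r)%N -> 0 < K -> neutral f i ->
  forall (t : nat) (h : {ffun 'I_t.+1 -> 'M[R]_(n, r)}),
    \sum_(om : {ffun 'I_t.+1 -> cfg n r * cfg n r})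
       seq_prob f K om * cga_traj f K (ext_seq om) t.+1 i j *
       ([forall s : 'I_t.+1, cga_traj f K (ext_seq om) s == h s])%:R
    =
    \sum_(om : {ffun 'I_t.+1 -> cfg n r * cfg n r})
       seq_prob f K om * cga_traj f K (ext_seq om) t i j *
       ([forall s : 'I_t.+1, cga_traj f K (ext_seq om) s == h s])%:R.
Proof.
move=> _ _ _ hn t h.
set S1 := (X in X = _); set S0 := (X in _ = X).
have Hprob : forall om, seq_prob f K (@Phi n r i t om) = seq_prob f K om.
  move=> om; rewrite /seq_prob; apply: eq_bigr => s _.
  rewrite traj_Phi; last by rewrite -ltnS.
  rewrite ffunE; case: eqP => [->|//].
  exact: sample_tau.
have Hind : forall om,
  [forall s : 'I_t.+1, cga_traj f K (ext_seq (@Phi n r i t om)) s == h s] =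
  [forall s : 'I_t.+1, cga_traj f K (ext_seq om) s == h s].
  move=> om; apply: eq_forallb => s; rewrite traj_Phi //; by rewrite -ltnS.
have Htr : forall om,
  cga_traj f K (ext_seq (@Phi n r i t om)) t.+1 i j + cga_traj f K (ext_seq om) t.+1 i j
  = cga_traj f K (ext_seq om) t i j *+ 2.
  move=> om; rewrite /= traj_Phi //.
  have -> : ext_seq (@Phi n r i t om) t = @tau n r i (ext_seq om t).
    rewrite /ext_seq ffunE.
    have -> : (inord t : 'I_t.+1) = ord_max by apply: val_inj; rewrite /= inordK.
    by rewrite eqxx.
  exact: update_tau.
have E : S1 = \sum_(om : {ffun 'I_t.+1 -> cfg n r * cfg n r})
       seq_prob f K (@Phi n r i t om) * cga_traj f K (ext_seq (@Phi n r i t om)) t.+1 i j *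
       ([forall s : 'I_t.+1, cga_traj f K (ext_seq (@Phi n r i t om)) s == h s])%:R.
  by rewrite /S1 (reindex_inj (inv_inj (@PhiK n r i t))).
have E2 : S1 + S1 = S0 *+ 2.
  rewrite {1}E /S0 -big_split -sumrMnl; apply: eq_bigr => om _.
  rewrite Hprob Hind.
  set a := seq_prob f K om; set b := (_ %:R).
  by rewrite -mulrnAl -mulrnAr -(Htr om) mulrDr mulrDl.
move: E2; rewrite mulr2n => E2; lra.
Qed.
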